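(* Let $p_d:\mathbb R^n\to\mathbb R$ be a homogeneous polynomial of degree $d\ge2$ consisting only of non-separable monomials (i.e., every monomial appearing in $p_d$ with nonzero coefficient involves at least two distinct variables). Then $p_d$ is not convex. *)

(* Defs.v *)
From HB Require Import structures.
From mathcomp Require Import all_boot all_order all_algebra.
From mathcomp Require Import reals.
From mathcomp Require Import mpoly.
Set Implicit Arguments. Unset Strict Implicit. Unset Printing Implicit Defensive.
Import Order.TTheory GRing.Theory Num.Theory.
Local Open Scope ring_scope.

Definition nonseparable_monom (n : nat) (m : 'X_{1..n}) : bool :=
  (1 < #|[set i : 'I_n | (m i != 0)%N]|)%N.

Definition only_nonseparable (R : nzRingType) (n : nat) (p : {mpoly R[n]}) : Prop :=
  forall m, m \in msupp p -> nonseparable_monom m.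

Definition mpoly_convex (R : realType) (n : nat) (p : {mpoly R[n]}) : Prop :=
  forall (x y : 'I_n -> R) (t : R), 0 <= t -> t <= 1 ->
    p.@[fun i => t * x i + (1 - t) * y i] <= t * p.@[x] + (1 - t) * p.@[y].

(* Main.v *)
Require Import Defs.
From HB Require Import structures.
From mathcomp Require Import all_boot all_order all_algebra.
From mathcomp Require Import reals.
From mathcomp Require Import mpoly.
From mathcomp Require Import lra.
Import Order.TTheory GRing.Theory Num.Theory.
Local Open Scope ring_scope.

Lemma digits_inj (D : nat) (n : nat) (a b : 'I_n -> nat) :
  (forall i, a i < D)%N -> (forall i, b i < D)%N ->
  (\sum_(i < n) D ^ i * a i = \sum_(i < n) D ^ i * b i)%N -> forall i, a i = b i.
Proof.
elim: n a b => [|n IH] a b Ha Hb E i; first by case: i.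
rewrite !big_ord_recl /= !expn0 !mul1n in E.
have D0 : (0 < D)%N by apply: leq_ltn_trans (Ha ord0).
have sh (c : 'I_n.+1 -> nat) : (\sum_(j < n) D ^ (bump 0 j) * c (lift ord0 j) =
     (\sum_(j < n) D ^ j * c (lift ord0 j)) * D)%N.
  rewrite big_distrl /=; apply: eq_bigr => j _.
  by rewrite /bump /= add1n expnS -mulnA mulnC.
rewrite !sh in E.
have E0 : a ord0 = b ord0.
  have := congr1 (fun z => z %% D)%N E.
  rewrite /= !(addnC (a ord0)) !(addnC (b ord0)) !modnMDl !modn_small //.

have E1 := E; rewrite E0 in E1; move/addnI: E1 => E1.
have E2 : (\sum_(j < n) D ^ j * a (lift ord0 j) = \sum_(j < n) D ^ j * b (lift ord0 j))%N.
  by apply/eqP; rewrite -(eqn_pmul2r D0) E1.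
have := IH (fun j => a (lift ord0 j)) (fun j => b (lift ord0 j)) (fun j => Ha _) (fun j => Hb _) E2.
move=> H; case: (unliftP ord0 i) => [j ->|->] //; exact: H.
Qed.
Lemma mpoly_eval0 (R : realType) (n : nat) (p : {mpoly R[n]}) :
  (forall x, p.@[x] = 0) -> p = 0.
Proof.
move=> H; apply/eqP; apply/negPn/negP => p0.
pose D := msize p.
pose kk (m : 'X_{1..n}) := (\sum_(i < n) D ^ i * m i)%N.
pose q : {poly R} := \sum_(m <- msupp p) p@_m *: 'X^(kk m).
have lt m i : m \in msupp p -> (m i < D)%N.
  move=> Hm; apply: leq_ltn_trans (msize_mdeg_lt Hm).
  rewrite mdegE (bigD1 i) //=; exact: leq_addr.
have Ev t : p.@[fun i => t ^+ (D ^ i)] = q.[t].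
  rewrite mevalE horner_sum; apply: eq_bigr => m _.
  rewrite hornerZ hornerXn; congr (_ * _).
  rewrite /kk (big_morph (fun k => t ^+ k) (exprD t) (expr0 t)).
  by apply: eq_bigr => i _; rewrite exprM.
have kinj m1 m2 : m1 \in msupp p -> m2 \in msupp p -> kk m1 = kk m2 -> m1 = m2.
  move=> H1 H2 E; apply/mnmP => i.
  exact: (@digits_inj D n (fun i => m1 i) (fun i => m2 i) (fun i => lt _ _ H1) (fun i => lt _ _ H2) E).
have q0 : q != 0.
  have Hm := mlead_supp p0.
  apply/negP => /eqP /(congr1 (fun r : {poly R} => r`_(kk (mlead p)))).
  rewrite coef0 coef_sum (bigD1_seq _ Hm (msupp_uniq p)) /= coefZ coefXn eqxx mulr1.
  rewrite big1_seq ?addr0.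
    by move=> /eqP; rewrite mcoeff_eq0 Hm.
  move=> m /andP [ne Hm']; rewrite coefZ coefXn.
  case: eqP => [E|_]; last by rewrite mulr0.
  by move: ne; rewrite (kinj _ _ Hm Hm' E) eqxx.
pose rs := [seq i%:R | i <- iota 0 (size q)] : seq R.
have A : all (root q) rs by apply/allP => r /mapP [i _ ->]; rewrite /root -Ev H.
have U : uniq rs by rewrite map_inj_uniq ?iota_uniq //; by move=> i j /eqP; rewrite eqr_nat => /eqP.
by have := max_poly_roots q0 A U; rewrite size_map size_iota ltnn.
Qed.
Lemma axis_zero (R : realType) (n : nat) (p : {mpoly R[n]}) :
  only_nonseparable p -> forall x : 'I_n -> R,
  (forall i j, x i != 0 -> x j != 0 -> i = j) -> p.@[x] = 0.
Proof.
move=> Hp x Hx; rewrite mevalE big_seq big1 // => m Hm.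
have := Hp m Hm; rewrite /nonseparable_monom => /card_gt1P [i [j [Hi Hj ne]]].
rewrite !inE in Hi Hj.
have [k [Hk xk]] : exists k, m k != 0%N /\ x k = 0.
  case: (eqVneq (x i) 0) => xi; first by exists i.
  case: (eqVneq (x j) 0) => xj; first by exists j.
  by move: ne; rewrite (Hx _ _ xi xj) eqxx.
rewrite (bigD1 k) //= xk expr0n (negbTE Hk).
by rewrite !mul0r mulr0.
Qed.

Theorem lemma3 (R : realType) (n d : nat) (p : {mpoly R[n]}) :
  (2 <= d)%N -> p != 0 -> p \is d.-homog -> only_nonseparable p ->
  ~ mpoly_convex p.
Proof.
move=> _ p0 _ Hp Hc; move/eqP: p0; apply; apply: mpoly_eval0.
have Hh : forall x y : 'I_n -> R,
    p.@[fun i => 2^-1 * x i + 2^-1 * y i] <= 2^-1 * p.@[x] + 2^-1 * p.@[y].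
  move=> x y; have := Hc x y (2^-1) ltac:(lra) ltac:(lra).
  have -> : 1 - 2^-1 = 2^-1 :> R by lra.
  done.
have le0 : forall k (x : 'I_n -> R), (forall i : 'I_n, (k <= i)%N -> x i = 0) -> p.@[x] <= 0.
  elim => [|k IH] x Hx.
    by rewrite (@axis_zero _ _ _ Hp) // => i j; rewrite Hx // eqxx.
  case: (ltnP k n) => hk; last first.
    apply: IH => i Hi; exfalso; move: (ltn_ord i); rewrite ltnNge.
    by rewrite (leq_trans hk Hi).
  pose j := Ordinal hk.
  pose x1 := fun i => if i == j then 0 else 2 * x i.
  pose z := fun i => if i == j then 2 * x i else 0.
  have -> : p.@[x] = p.@[fun i => 2^-1 * x1 i + 2^-1 * z i].
    apply: meval_eq => i; rewrite /x1 /z; case: (i == j); lra.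
  apply: le_trans (Hh _ _) _.
  have h1 : p.@[x1] <= 0.
    apply: IH => i Hi; rewrite /x1; case: eqP => // ne.
    rewrite Hx ?mulr0 //; rewrite leq_eqVlt in Hi.
    case/orP: Hi => [/eqP Hi|//]; exfalso; apply: ne; exact: val_inj.
  have h2 : p.@[z] = 0.
    apply: (@axis_zero _ _ _ Hp) => a b; rewrite /z.
    case: (eqVneq a j) => [->|na]; last by rewrite eqxx.
    by case: (eqVneq b j) => [->|nb] //; rewrite eqxx.
  rewrite h2; lra.
move=> x; apply/eqP; rewrite eq_le (le0 n x) //=; last first.
  by move=> i Hi; exfalso; move: (ltn_ord i); rewrite ltnNge Hi.
have h1 : p.@[fun i => - x i] <= 0.
  by apply: (le0 n) => i Hi; exfalso; move: (ltn_ord i); rewrite ltnNge Hi.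
have h0 : p.@[fun i => 2^-1 * x i + 2^-1 * - x i] = 0.
  by apply: (@axis_zero _ _ _ Hp) => i j; rewrite mulrN subrr eqxx.
have := Hh x (fun i => - x i); rewrite h0 => h; lra.
Qed.
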